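(* Let $X$ be a scalar random variable with distribution $\pi$ and upper bound $\ell\in\mathbb{R}$ such that $\mathbb{P}_\pi[X\le\ell]=1$. Let $\alpha\in(0,1]$, $\epsilon\in[0,1]$, and define \[ L(x,\mu,t) = t\left(\mu + \frac{1}{\alpha}\max\left\{\frac{x}{t}-\mu,0\right\}\right),\qquad u_b(\mu,t)=L(\ell,\mu,t). \] For $N$ independent samples $x_1,\dots,x_N$ of $X$, let $\zeta^*_N(\mu,t)=\max_{1\le k\le N}L(x_k,\mu,t)$. Then \[ \mathbb{P}^N_{\pi}\left[\mathrm{CVaR}_\alpha(X)\le \inf_{\mu\in\mathbb{R},\ t>0}\zeta^*_N(\mu,t)(1-\epsilon)+u_b(\mu,t)\epsilon\right]\ge 1-(1-\epsilon)^N. \]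
   Context: The Conditional-Value-at-Risk at level $\alpha\in(0,1]$ is $\mathrm{CVaR}_\alpha(X)=\inf_{z\in\mathbb{R}}\ z+\frac{\mathbb{E}_\pi[\max(X-z,0)]}{\alpha}$ (equivalently $\mathbb{E}_\pi[X\mid X\ge \mathrm{VaR}_\alpha(X)]$, where $\mathrm{VaR}_\alpha(X)=\inf\{\zeta : \mathbb{P}_\pi[X\le\zeta]\ge 1-\alpha\}$). $\zeta^*_N(\mu,t)$ is the solution of $\min_\zeta\zeta$ subject to $\zeta\ge L(x_i,\mu,t)$ for all $i$. $\mathbb{P}^N_\pi$ is the $N$-fold product measure governing the i.i.d. sample. *)

(* Defs.v *)
From HB Require Import structures.
From mathcomp Require Import all_boot all_order all_algebra.
From mathcomp Require Import all_classical all_reals all_analysis.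
Set Implicit Arguments. Unset Strict Implicit. Unset Printing Implicit Defensive.
Import Order.TTheory GRing.Theory Num.Theory.
Import numFieldNormedType.Exports.
Local Open Scope classical_set_scope.
Local Open Scope ring_scope.

Definition cvar_loss (R : realType) (alpha x mu t : R) : R :=
  t * (mu + alpha^-1 * Num.max (x / t - mu) 0).

Definition CVaR (R : realType) (pi : probability R R) (alpha : R) : \bar R :=
  ereal_inf [set (z%:E + (alpha^-1)%:E *
                   \int[pi]_(x in setT) (Num.max (x - z) 0)%:E)%E | z in [set: R]].

(* zeta*_N(mu,t) = max_k L(x_k, mu, t)  (as an extended real; -oo if N = 0) *)
Definition zeta_star (R : realType) (N : nat) (alpha : R) (xs : 'I_N -> R)
    (mu t : R) : \bar R :=
  (\big[maxe/-oo%E]_(i < N) (cvar_loss alpha (xs i) mu t)%:E)%E.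

Definition iid_with_law (d : measure_display) (Omega : measurableType d)
    (R : realType) (P : probability Omega R) (pi : probability R R) (N : nat)
    (xs : 'I_N -> Omega -> R) : Prop :=
  (forall i, measurable_fun [set: Omega] (xs i)) /\
  forall B : 'I_N -> set R, (forall i, measurable (B i)) ->
    P (\bigcap_(i in [set: 'I_N]) (xs i @^-1` B i)) = (\prod_(i < N) pi (B i))%E.

(* Main.v *)
Require Import Defs.
From HB Require Import structures.
From mathcomp Require Import all_boot all_order all_algebra.
From mathcomp Require Import all_classical all_reals all_analysis.
From mathcomp Require Import measurable_realfun ring lra.
Import Order.TTheory GRing.Theory Num.Theory.
Import numFieldNormedType.Exports.
Local Open Scope classical_set_scope.
Local Open Scope ring_scope.
Set Implicit Arguments. Unset Strict Implicit. Unset Printing Implicit Defensive.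

Lemma down_measurable (R : realType) (S : set R) :
  (forall x y, S x -> y <= x -> S y) -> measurable S.
Proof.
move=> H; apply: is_interval_measurable => x y Sx Sy z /andP[_ zy].
exact: H Sy zy.
Qed.

Lemma up_measurable (R : realType) (S : set R) :
  (forall x y, S x -> x <= y -> S y) -> measurable S.
Proof.
move=> H; apply: is_interval_measurable => x y Sx Sy z /andP[xz _].
exact: H Sx xz.
Qed.

Lemma down_measure (R : realType) (pi : probability R R) (c : \bar R) (S : set R) :
  (forall x y, S x -> y <= x -> S y) -> (exists b, ~ S b) -> (0 <= c)%E ->
  (forall y, S y -> pi [set x | (x <= y)%R] <= c)%E -> (pi S <= c)%E.
Proof.
move=> Hd [b Nb] c0 Hc.
have mS := down_measurable Hd.
have mle y : measurable [set x : R | x <= y].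
  by apply: down_measurable => x z /= h1 h2; exact: le_trans h2 h1.
have ub : ubound S b.
  move=> x Sx; rewrite leNgt; apply/negP => bx; apply: Nb; exact: Hd Sx (ltW bx).
have [S0|S0] := pselect (S !=set0); last first.
  have -> : S = set0 by apply/seteqP; split=> x // Sx; apply: S0; exists x.
  by rewrite measure0.
have hsup : has_sup S by split => //; exists b.
set s := sup S.
have [Ss|NSs] := pselect (S s).
  apply: le_trans (Hc _ Ss); apply: le_measure; rewrite ?inE //.
  by move=> x Sx /=; exact: sup_upper_bound hsup _ Sx.
set G := fun n : nat => [set x : R | x <= s - n.+1%:R^-1].
have GS n : S (s - n.+1%:R^-1).
  have hpos : 0 < n.+1%:R^-1 :> R by rewrite invr_gt0.
  have [r Sr lt] := sup_adherent hpos hsup.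
  exact: Hd Sr (ltW lt).
have SE : S = \bigcup_n G n.
  apply/seteqP; split.
    move=> x Sx.
    have xs : x < s.
      rewrite lt_neqAle (sup_upper_bound hsup Sx) andbT.
      by apply/eqP => xs; apply: NSs; rewrite -xs.
    have [k hk] := ltr_add_invr xs.
    by exists k => //; rewrite /G /= lerBrDr ltW.
  by move=> x [n _ Gx]; exact: Hd (GS n) Gx.
rewrite SE.
have mG n : measurable (G n) by exact: mle.
have nd : nondecreasing_seq G.
  move=> m n mn; apply/subsetPset => x; rewrite /G /= => h; apply: le_trans h _.
  by rewrite lerD2l lerN2 lef_pV2 ?posrE // ler_nat ltnS.
have mU : measurable (\bigcup_n G n) by rewrite -SE.
have cv := nondecreasing_cvg_mu (mu := pi) mG mU nd.
apply: (cvge_to_le cv); near=> n; exact: Hc (GS n).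
Unshelve. all: by end_near.
Qed.


Lemma core (R : realType) (pi : probability R R) (ell alpha eps r z : R) :
  pi [set x | x <= ell] = 1%E -> 0 < alpha -> 0 <= eps <= 1 ->
  (pi [set x | (r < x)%R] <= eps%:E)%E ->
  (\int[pi]_(x in setT) (Num.max (x - z) 0)%:E <=
   ((1 - eps) * Num.max (r - z) 0 + eps * Num.max (ell - z) 0)%:E)%E.
Proof.
move=> hell ha /andP[e0 e1] hr.
set h := fun x : R => Num.max (x - z) 0.
have hmono x y : x <= y -> h x <= h y.
  by move=> xy; rewrite /h ge_max !le_max lexx !orbT lerD2r xy.
have h0 x : 0 <= h x by rewrite /h le_max lexx orbT.
have mh : measurable_fun setT h.
  by apply: measurable_maxr; [apply: measurable_funB|exact: measurable_cst].
have mgt y : measurable [set x : R | y < x].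
  by apply: up_measurable => a b /= h1 h2; exact: lt_le_trans h1 h2.
have mle y : measurable [set x : R | x <= y].
  by apply: down_measurable => a b /= h1 h2; exact: le_trans h2 h1.
have pgt : pi [set x | ell < x] = 0%E.
  have -> : [set x : R | ell < x] = ~` [set x | x <= ell].
    by apply/seteqP; split => x /=; rewrite ltNge => /negP.
  by rewrite probability_setC // hell subee.
set r' := Num.min r ell.
have r'l : r' <= ell by rewrite /r' ge_min lexx orbT.
have hr' : (pi [set x | (r' < x)%R] <= eps%:E)%E.
  rewrite /r'; case: (leP r ell) => [rl|lr] //.
  by rewrite pgt lee_fin.
set A := [set x : R | r' < x].
set Dd := h ell - h r'.
have Dd0 : 0 <= Dd by rewrite subr_ge0 hmono.
apply: (@le_trans _ _ (\int[pi]_(x in setT) ((h r')%:E + (Dd%:E * (\1_A x)%:E)))%E).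
  apply: ae_ge0_le_integral => //.
  - by move=> x _; rewrite lee_fin; exact: h0.
  - exact/measurable_EFinP.
  - by move=> x _; rewrite -EFinM -EFinD lee_fin addr_ge0 // mulr_ge0 // indicE ler0n.
  - apply: (emeasurable_funD (f := fun _ => (h r')%:E) (g := fun x => Dd%:E * (\1_A x)%:E)%E).
      exact: measurable_cst.
    apply: measurable_funeM; apply: measurableT_comp => //; exact: measurable_indic (mgt r').
  - exists [set x | ell < x]; split => //.
    move=> x /= hx; rewrite ltNge; apply/negP => xl; apply: hx => _.
    rewrite -EFinM -EFinD lee_fin /indic /=.
    case: (leP x r') => xr.
      have nA : ~ A x by rewrite /A /= ltNge xr.
      rewrite (memNset nA) mulr0 addr0; exact: hmono.
    have yA : A x by [].
    rewrite (mem_set yA) mulr1 /Dd addrCA subrr addr0; exact: hmono.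
rewrite ge0_integralD //.
  rewrite integral_cst //.
  set m1 := (X in ((_ * X) + _)%E).
  have -> : m1 = 1%E by exact: probability_setT.
  rewrite mule1.
  rewrite ge0_integralZl_EFin //;
    try (by move=> x _; rewrite lee_fin indicE ler0n);
    try (by apply: measurableT_comp => //; exact: measurable_indic (mgt r')).
  rewrite integral_indic //.
  set m2 := (X in (Dd%:E * X)%E).
  have hm2 : (m2 <= eps%:E)%E.
    apply: (le_trans _ hr'); rewrite /m2; apply: le_measure; rewrite ?inE.
    - by apply: measurableI => //; exact: mgt.
    - exact: mgt.
    - by move=> x [].
  apply: (@le_trans _ _ ((h r')%:E + (Dd%:E * eps%:E)))%E.
    by rewrite leeD2l // lee_wpmul2l // lee_fin.
  rewrite -EFinM -EFinD lee_fin.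
  have hrr : h r' <= h r by apply: hmono; rewrite /r' ge_min lexx.
  rewrite /Dd; change (Num.max (r - z) 0) with (h r).
  change (Num.max (ell - z) 0) with (h ell).
  move: hrr e1 e0; set a := h r'; set b := h r; set c := h ell => hrr e1 e0.
  nra.
all: try (by move=> x _; rewrite lee_fin; exact: h0).
all: try (by move=> x _; rewrite -EFinM lee_fin mulr_ge0 // indicE ler0n).
all: try (by apply: measurable_funeM; apply: measurableT_comp => //; exact: measurable_indic (mgt r')).
all: try (exact: measurable_cst).
exact: mgt.
Qed.


Lemma loss_eq (R : realType) (alpha x mu t : R) : 0 < t ->
  cvar_loss alpha x mu t = t * mu + alpha^-1 * Num.max (x - t * mu) 0.
Proof.
move=> t0; rewrite /cvar_loss mulrDr mulrCA maxr_pMr ?ltW // mulr0.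
congr (_ + _ * Num.max _ _); rewrite mulrBr mulrCA divff ?mulr1 //.
by rewrite gt_eqF.
Qed.

Lemma loss_mono (R : realType) (alpha x y mu t : R) : 0 < alpha -> 0 < t -> x <= y ->
  cvar_loss alpha x mu t <= cvar_loss alpha y mu t.
Proof.
move=> a0 t0 xy; rewrite !loss_eq // lerD2l; apply: ler_wpM2l; first by rewrite invr_ge0 ltW.
by rewrite ge_max !le_max lexx !orbT lerD2r xy.
Qed.

Lemma cvar_le (R : realType) (pi : probability R R) (ell alpha eps r mu t : R) :
  pi [set x | x <= ell] = 1%E -> 0 < alpha -> 0 <= eps <= 1 -> 0 < t ->
  (pi [set x | (r < x)%R] <= eps%:E)%E ->
  (CVaR pi alpha <=
     ((1 - eps) * cvar_loss alpha r mu t + eps * cvar_loss alpha ell mu t)%:E)%E.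
Proof.
move=> hell ha he t0 hr.
set z := t * mu.
apply: (@le_trans _ _ (z%:E + (alpha^-1)%:E *
                   \int[pi]_(x in setT) (Num.max (x - z) 0)%:E)%E).
  by apply: ereal_inf_lbound; exists z.
apply: (@le_trans _ _ (z%:E + (alpha^-1)%:E *
   ((1 - eps) * Num.max (r - z) 0 + eps * Num.max (ell - z) 0)%:E)%E).
  rewrite leeD2l //; apply: lee_wpmul2l; first by rewrite lee_fin invr_ge0 ltW.
  exact: (core z hell ha he hr).
rewrite -EFinM -EFinD lee_fin !loss_eq // -/z.
lra.
Qed.


Lemma bigmax_mono (R : realType) (f : R -> R) n (y : 'I_n -> R) (r0 : R) :
  {homo f : a b / a <= b} ->
  (f (\big[Num.max/r0]_(i < n) y i))%:E =
    maxe (f r0)%:E (\big[maxe/-oo%E]_(i < n) (f (y i))%:E).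
Proof.
move=> fm.
have fmax a b : f (Num.max a b) = Num.max (f a) (f b).
  case: (leP a b) => h; first by rewrite (max_idPr (fm _ _ h)).
  by rewrite (max_idPl (fm _ _ (ltW h))).
apply: (big_rec2 (fun a b => (f a)%:E = maxe (f r0)%:E b)); first by rewrite maxeNy.
by move=> i a b _ h; rewrite fmax EFin_max h maxCA.
Qed.

Lemma meas_bigmax d (T : measurableType d) (R : realType) (I : Type) (s : seq I)
  (f : I -> T -> R) (g : T -> R) :
  measurable_fun setT g -> (forall i, measurable_fun setT (f i)) ->
  measurable_fun setT (fun w => \big[Num.max/g w]_(i <- s) f i w).
Proof.
move=> mg mf; elim: s => [|a s IH].
  by under eq_fun do rewrite big_nil.
under eq_fun do rewrite big_cons.
exact: (measurable_maxr (mf a) IH).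
Qed.

Lemma prob_real d (T : measurableType d) (R : realType) (P : probability T R) A :
  measurable A -> exists p : R, P A = p%:E /\ 0 <= p <= 1.
Proof.
move=> mA; have hf : P A \is a fin_num := fin_num_measure P A mA.
exists (fine (P A)); split; first by rewrite fineK.
apply/andP; split; rewrite -lee_fin fineK //.
exact: probability_le1.
Qed.

Lemma prod_le (R : realType) (q c : R) N : 0 <= q -> q <= c ->
  \prod_(i < N) q <= c ^+ N.
Proof.
move=> q0 qc; elim: N => [|n IH]; first by rewrite big_ord0 expr0.
rewrite big_ord_recr exprSr /=; apply: ler_pM => //.
exact: prodr_ge0.
Qed.

Lemma pgt0 (R : realType) (pi : probability R R) ell :
  pi [set x | x <= ell] = 1%E -> pi [set x | ell < x] = 0%E.
Proof.
move=> hell.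
have mle : measurable [set x : R | x <= ell].
  by apply: down_measurable => a b /= h1 h2; exact: le_trans h2 h1.
have -> : [set x : R | ell < x] = ~` [set x | x <= ell].
  by apply/seteqP; split => x /=; rewrite ltNge => /negP.
by rewrite probability_setC // hell subee.
Qed.

Lemma aux1 (R : realType) (eps p : R) : eps < 1 - p -> p <= 1 - eps.
Proof. move=> h; lra. Qed.

Lemma aux2 (R : realType) (a b c : R) : 1 - a <= b -> b <= c -> 1 - c <= a.
Proof. move=> h1 h2; lra. Qed.

Lemma set_eq_aux (R : realType) (F G H : R -> R -> \bar R) (c : \bar R) :
  (forall mu t, 0 < t -> F mu t = G mu t) ->
  [set y | exists mu t : R, (0 < t)%R /\ y = (c * F mu t + H mu t)%E] =
  [set y | exists mu t : R, (0 < t)%R /\ y = (c * G mu t + H mu t)%E].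
Proof.
move=> FG; apply/seteqP; split => y [mu [t [t0 ->]]]; exists mu, t; split => //.
  by rewrite FG.
by rewrite FG.
Qed.

Lemma E_meas (R : realType) (pi : probability R R) (ell alpha eps : R)
  (d : measure_display) (Omega : measurableType d)
  (N : nat) (xs : 'I_N -> Omega -> R) :
  0 < alpha -> 0 <= eps <= 1 ->
  (forall i, measurable_fun [set: Omega] (xs i)) ->
  measurable [set w : Omega |
    (CVaR pi alpha <=
     ereal_inf [set y : \bar R | exists mu t : R, (0 < t)%R /\
                  y = ((1 - eps)%:E * zeta_star alpha (fun k => xs k w) mu t
                       + (eps * cvar_loss alpha ell mu t)%:E)%E])%E].
Proof.
move=> a0 /andP[e0 e1]; case: N xs => [|n] xs mxs.
  set T0 := [set y : \bar R | exists mu t : R, (0 < t)%R /\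
                  y = ((1 - eps)%:E * -oo + (eps * cvar_loss alpha ell mu t)%:E)%E].
  have -> : [set w : Omega |
    (CVaR pi alpha <=
     ereal_inf [set y : \bar R | exists mu t : R, (0 < t)%R /\
                  y = ((1 - eps)%:E * zeta_star alpha (fun k => xs k w) mu t
                       + (eps * cvar_loss alpha ell mu t)%:E)%E])%E] =
    [set w : Omega | (CVaR pi alpha <= ereal_inf T0)%E].
    apply/seteqP; split => w /=; rewrite (@set_eq_aux _ _ (fun _ _ => -oo%E)) //;
      by move=> mu t _; rewrite /zeta_star big_ord0.
  have [hQ|hQ] := pselect (CVaR pi alpha <= ereal_inf T0)%E.
    have -> : [set w : Omega | (CVaR pi alpha <= ereal_inf T0)%E] = setT.
      by apply/seteqP; split.
    exact: measurableT.
  have -> : [set w : Omega | (CVaR pi alpha <= ereal_inf T0)%E] = set0.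
    by apply/seteqP; split.
  exact: measurable0.
set m := fun w => \big[Num.max/xs ord0 w]_(i < n.+1) xs i w.
have mm : measurable_fun setT m.
  by apply: meas_bigmax => //; exact: mxs.
set V := fun r : R => [set y : \bar R | exists mu t : R, (0 < t)%R /\
         y = ((1 - eps)%:E * (cvar_loss alpha r mu t)%:E
                       + (eps * cvar_loss alpha ell mu t)%:E)%E].
set U := [set r : R | (CVaR pi alpha <= ereal_inf (V r))%E].
have Uup : forall x y, U x -> x <= y -> U y.
  move=> x y Ux xy; rewrite /U /=; apply: (le_trans Ux).
  apply: le_ereal_inf_tmp => z [mu [t [t0 ->]]].
  apply: (@le_trans _ _ ((1 - eps)%:E * (cvar_loss alpha x mu t)%:E + (eps * cvar_loss alpha ell mu t)%:E)%E).
    by apply: ereal_inf_lbound; exists mu, t.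
  rewrite leeD2r //; apply: lee_wpmul2l; first by rewrite lee_fin subr_ge0.
  by rewrite lee_fin; apply: loss_mono.
have mU := up_measurable Uup.
have -> : [set w : Omega |
    (CVaR pi alpha <=
     ereal_inf [set y : \bar R | exists mu t : R, (0 < t)%R /\
                  y = ((1 - eps)%:E * zeta_star alpha (fun k => xs k w) mu t
                       + (eps * cvar_loss alpha ell mu t)%:E)%E])%E] = m @^-1` U.
  have hw w : [set y : \bar R | exists mu t : R, (0 < t)%R /\
                  y = ((1 - eps)%:E * zeta_star alpha (fun k => xs k w) mu t
                       + (eps * cvar_loss alpha ell mu t)%:E)%E] = V (m w).
    rewrite (@set_eq_aux _ _ (fun mu t => (cvar_loss alpha (m w) mu t)%:E)); first reflexivity.
    move=> mu t t0; rewrite /m.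
    have fm : {homo (fun x => cvar_loss alpha x mu t) : a b / a <= b}.
      by move=> a b ab; exact: loss_mono.
    have := @bigmax_mono R (fun x => cvar_loss alpha x mu t) n.+1 (fun i => xs i w) (xs ord0 w) fm.
    move=> ->; rewrite /zeta_star (max_idPr _) //.
    exact: le_bigmax.
  by apply/seteqP; split => w /=; rewrite hw.
by have := mm measurableT U mU; rewrite setTI.
Qed.

Unset Implicit Arguments.

Theorem corollary3 (R : realType) (pi : probability R R) (ell alpha eps : R)
  (d : measure_display) (Omega : measurableType d) (P : probability Omega R)
  (N : nat) (xs : 'I_N -> Omega -> R) :
  pi [set x : R | x <= ell] = 1%E ->
  0 < alpha <= 1 ->
  0 <= eps <= 1 ->
  iid_with_law P pi xs ->
  let E := [set w : Omega |
    (CVaR pi alpha <=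
     ereal_inf [set y : \bar R | exists mu t : R, (0 < t)%R /\
                  y = ((1 - eps)%:E * zeta_star alpha (fun k => xs k w) mu t
                       + (eps * cvar_loss alpha ell mu t)%:E)%E])%E] in
  measurable E /\ ((1 - (1 - eps) ^+ N)%:E <= P E)%E.
Proof.
move=> hell /andP[a0 a1] he [mxs hiid] E.
have /andP[e0 e1] := he.
have mgt y : measurable [set x : R | y < x].
  by apply: up_measurable => a b /= h1 h2; exact: lt_le_trans h1 h2.
have mle y : measurable [set x : R | x <= y].
  by apply: down_measurable => a b /= h1 h2; exact: le_trans h2 h1.
set S := [set x : R | (eps%:E < pi [set y | (x < y)%R])%E].
have Sdown : forall x y, S x -> y <= x -> S y.
  move=> x y Sx yx; rewrite /S /=; apply: (lt_le_trans Sx); apply: le_measure.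
  - by rewrite inE; exact: mgt.
  - by rewrite inE; exact: mgt.
  - by move=> u /= xu; exact: le_lt_trans yx xu.
have mS := down_measurable Sdown.
have nSl : ~ S ell by rewrite /S /= pgt0 // lte_fin ltNge e0.
have piS : (pi S <= (1 - eps)%:E)%E.
  apply: (down_measure Sdown (ex_intro _ ell nSl)); first by rewrite lee_fin subr_ge0.
  move=> y Sy; have [p [hp _]] := prob_real pi (mle y); rewrite hp.
  have hc : pi [set x | y < x] = (1 - p)%:E.
    have -> : [set x : R | y < x] = ~` [set x | x <= y].
      by apply/seteqP; split => x /=; rewrite ltNge => /negP.
    by rewrite probability_setC // hp.
  by move: Sy; rewrite /S /= hc lte_fin lee_fin; exact: aux1.
have zge w i mu t : ((cvar_loss alpha (xs i w) mu t)%:E <=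
    zeta_star alpha (fun k => xs k w) mu t)%E.
  by rewrite /zeta_star; apply: le_bigmax.
have key : forall w, ~ E w -> forall i, S (xs i w).
  move=> w nE i; apply: contrapT => nS; apply: nE.
  rewrite /E /=; apply: le_ereal_inf_tmp => y [mu [t [t0 ->]]].
  have hr : (pi [set x | (xs i w < x)%R] <= eps%:E)%E.
    by rewrite leNgt; apply/negP.
  apply: le_trans (cvar_le mu hell a0 he t0 hr) _.
  rewrite EFinD EFinM; apply: leeD => //; apply: lee_wpmul2l.
    by rewrite lee_fin subr_ge0.
  exact: zge.
have mE : measurable E by exact: E_meas.
split => //.
have hc : ~` E `<=` \bigcap_(i in [set: 'I_N]) (xs i @^-1` S).
  by move=> w nE i _; exact: key.
have mxS i : measurable (xs i @^-1` S).
  by have := mxs i measurableT S mS; rewrite setTI.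
have mI : measurable (\bigcap_(i in [set: 'I_N]) (xs i @^-1` S)).
  by apply: fin_bigcap_measurable => //; exact: finite_finset.
have hP := hiid (fun _ => S) (fun _ => mS).
have [q [hq /andP[q0 q1]]] := prob_real pi mS.
have qe : q <= 1 - eps by rewrite -lee_fin -hq.
have [pE [hpE _]] := prob_real P mE.
have hC : P (~` E) = (1 - pE)%:E by rewrite probability_setC // hpE.
have : (P (~` E) <= P (\bigcap_(i in [set: 'I_N]) (xs i @^-1` S)))%E.
  by apply: le_measure => //; rewrite inE //; exact: measurableC.
rewrite hC hP hq prodEFin lee_fin => h1.
have h2 := prod_le N q0 qe.
rewrite hpE lee_fin; exact: aux2 h1 h2.
Qed.
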